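(* Let $\mathcal D$ be an ordered, oriented Descartes configuration and consider the orbit $\mathcal A^\perp(\mathcal D)=\{\mathcal D':\mathbf W_{\mathcal D'}=\mathbf U\mathbf W_{\mathcal D},\ \mathbf U\in\mathcal A^\perp\}$. Let $\mathcal P^\perp_{\mathcal D}$ be the set of all circles (as unoriented point sets in $\hat{\mathbb C}$) occurring in configurations of this orbit. Then no two circles of $\mathcal P^\perp_{\mathcal D}$ cross: any two circles in $\mathcal P^\perp_{\mathcal D}$ either coincide, or are tangent (meet in exactly one point), or are disjoint.
   Context: Oriented circles/lines and oriented Descartes configurations: four mutually tangent oriented circles/lines with six distinct tangency points whose interiors are pairwise disjoint or become so after reversing all orientations (interior of a positively curved circle is the open disk, of a negatively curved one the open exterior, of a line the half-plane its unit normal points into). Augmented curvature-center coordinates: for center $\mathbf c$, oriented radius $r$: $\mathbf w(C)=((|\mathbf c|^2-r^2)/r,1/r,c_1/r,c_2/r)$; for the line $\mathbf x\cdot\mathbf h=m$ with interior-pointing unit normal $\mathbf h$: $(2m,0,h_1,h_2)$; $\mathbf W_{\mathcal D}$ has rows $\mathbf w(C_k)$. Known fact: $\mathcal D\mapsto\mathbf W_{\mathcal D}$ is a bijection onto $\{\mathbf W:\mathbf W^T\mathbf Q_D\mathbf W=\mathbf Q_W\}$ with $\mathbf Q_D=\mathbf I-\frac12\mathbf 1\mathbf 1^T$, $\mathbf Q_W=\begin{pmatrix}0&-4&0&0\\-4&0&0&0\\0&0&2&0\\0&0&0&2\end{pmatrix}$. The dual Apollonian group is $\mathcal A^\perp=\langle\mathbf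 S_1^\perp,\dots,\mathbf S_4^\perp\rangle$, where $\mathbf S_i^\perp$ agrees with the $4\times 4$ identity except in column $i$, which has $-1$ in position $i$ and $2$ in the other three positions (e.g. $\mathbf S_1^\perp$ has first column $(-1,2,2,2)^T$); these matrices preserve $\mathbf Q_D$. *)

(* Defs.v *)
From HB Require Import structures.
From mathcomp Require Import all_boot all_order all_algebra.
From mathcomp Require Import reals.
Set Implicit Arguments. Unset Strict Implicit. Unset Printing Implicit Defensive.
Import Order.TTheory GRing.Theory Num.Theory.
Local Open Scope ring_scope.

Section Defs.
Variable R : realType.

(* Oriented circle with center (c1,c2) and oriented (signed) radius r,
   or oriented line  x . h = m  with unit normal h pointing into the interior. *)
Inductive ocircle : Type :=
| OCirc (c1 c2 r : R)
| OLine (h1 h2 m : R).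

Definition valid_ocircle (C : ocircle) : Prop :=
  match C with
  | OCirc _ _ r => r != 0
  | OLine h1 h2 _ => h1 ^+ 2 + h2 ^+ 2 = 1
  end.

(* Points of the extended plane \hat C : None is the point at infinity. *)
Definition xpoint := option (R * R)%type.

Definition on_circle (C : ocircle) (p : xpoint) : Prop :=
  match C, p with
  | OCirc c1 c2 r, Some (x1, x2) => (x1 - c1) ^+ 2 + (x2 - c2) ^+ 2 = r ^+ 2
  | OCirc _ _ _, None => False
  | OLine h1 h2 m, Some (x1, x2) => x1 * h1 + x2 * h2 = m
  | OLine _ _ _, None => True
  end.

Definition interior (C : ocircle) (x : R * R) : Prop :=
  match C with
  | OCirc c1 c2 r =>
      if 0 < r then (x.1 - c1) ^+ 2 + (x.2 - c2) ^+ 2 < r ^+ 2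
      else r ^+ 2 < (x.1 - c1) ^+ 2 + (x.2 - c2) ^+ 2
  | OLine h1 h2 m => m < x.1 * h1 + x.2 * h2
  end.

Definition reverse (C : ocircle) : ocircle :=
  match C with
  | OCirc c1 c2 r => OCirc c1 c2 (- r)
  | OLine h1 h2 m => OLine (- h1) (- h2) (- m)
  end.

Definition tangent_at (C D : ocircle) (p : xpoint) : Prop :=
  on_circle C p /\ on_circle D p /\
  forall q, on_circle C q -> on_circle D q -> q = p.

Definition interiors_disjoint (D : 'I_4 -> ocircle) : Prop :=
  forall i j : 'I_4, i != j -> forall x, ~ (interior (D i) x /\ interior (D j) x).

Definition descartes (D : 'I_4 -> ocircle) : Prop :=
  (forall i, valid_ocircle (D i)) /\
  (exists tp : 'I_4 -> 'I_4 -> xpoint,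
     (forall i j : 'I_4, i != j -> tangent_at (D i) (D j) (tp i j)) /\
     (forall i j k l : 'I_4, (i < j)%N -> (k < l)%N -> (i, j) != (k, l) ->
        tp i j <> tp k l)) /\
  (interiors_disjoint D \/ interiors_disjoint (fun i => reverse (D i))).

Definition wseq (C : ocircle) : seq R :=
  match C with
  | OCirc c1 c2 r => [:: (c1 ^+ 2 + c2 ^+ 2 - r ^+ 2) / r; r^-1; c1 / r; c2 / r]
  | OLine h1 h2 m => [:: 2 * m; 0; h1; h2]
  end.

Definition Wmat (D : 'I_4 -> ocircle) : 'M[R]_4 :=
  \matrix_(k < 4, j < 4) nth 0 (wseq (D k)) j.

Definition Sperp (i : 'I_4) : 'M[R]_4 :=
  \matrix_(a < 4, b < 4)
    if b == i then (if a == i then -1 else 2) else (a == b)%:R.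

Inductive in_Aperp : 'M[R]_4 -> Prop :=
| Aperp_one : in_Aperp 1%:M
| Aperp_gen i : in_Aperp (Sperp i)
| Aperp_mul U V : in_Aperp U -> in_Aperp V -> in_Aperp (U *m V)
| Aperp_inv U : in_Aperp U -> in_Aperp (invmx U).

Definition in_orbit (D D' : 'I_4 -> ocircle) : Prop :=
  descartes D' /\ exists U, in_Aperp U /\ Wmat D' = U *m Wmat D.

Definition in_Pperp (D : 'I_4 -> ocircle) (C : ocircle) : Prop :=
  exists D', in_orbit D D' /\ exists i, D' i = C.

End Defs.

(* Main.v *)
Require Import Defs.
From HB Require Import structures.
From mathcomp Require Import all_boot all_order all_algebra.
From mathcomp Require Import reals ring lra.
From Stdlib Require Import Classical Lia.
From mathcomp Require Import zify.
Set Implicit Arguments. Unset Strict Implicit. Unset Printing Implicit Defensive.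
Import Order.TTheory GRing.Theory Num.Theory.
Local Open Scope ring_scope.

Section Geo.
Variable R : realType.


Definition prw (x y : seq R) : R :=
  - (x`_0 * y`_1 + x`_1 * y`_0) / 2 + x`_2 * y`_2 + x`_3 * y`_3.
Definition prc (C C' : ocircle R) := prw (wseq C) (wseq C').

Lemma prcCC c1 c2 r d1 d2 s : r != 0 -> s != 0 ->
  prc (OCirc c1 c2 r) (OCirc d1 d2 s) =
  (r^+2 + s^+2 - ((c1-d1)^+2 + (c2-d2)^+2)) / (2*r*s).
Proof. move=> hr hs; rewrite /prc /prw /=. field. by rewrite hr hs. Qed.

Lemma prcCL c1 c2 r h1 h2 m : r != 0 ->
  prc (OCirc c1 c2 r) (OLine h1 h2 m) = (c1*h1 + c2*h2 - m) / r.
Proof. move=> hr; rewrite /prc /prw /=. field. by rewrite hr. Qed.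

Lemma prcLL h1 h2 m g1 g2 n : prc (OLine h1 h2 m) (OLine g1 g2 n) = h1*g1 + h2*g2.
Proof. rewrite /prc /prw /=. ring. Qed.

Lemma prcC C C' : prc C C' = prc C' C.
Proof. rewrite /prc /prw. ring. Qed.

Lemma prc_rev C C' : prc (reverse C) (reverse C') = prc C C'.
Proof. by case: C => ???; case: C' => ???; rewrite /prc /prw /= ?invrN; ring. Qed.

Lemma sq0 (a b : R) : a^+2 + b^+2 = 0 -> a = 0 /\ b = 0.
Proof. move=> H; split; nra. Qed.


Lemma CC_tan (c1 c2 r d1 d2 s x1 x2 : R) : r != 0 -> s != 0 ->
  (x1-c1)^+2 + (x2-c2)^+2 = r^+2 -> (x1-d1)^+2 + (x2-d2)^+2 = s^+2 ->
  (forall y1 y2 : R, (y1-c1)^+2 + (y2-c2)^+2 = r^+2 ->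
      (y1-d1)^+2 + (y2-d2)^+2 = s^+2 -> y1 = x1 /\ y2 = x2) ->
  ((r^+2 + s^+2 - ((c1-d1)^+2 + (c2-d2)^+2)) / (2*r*s)) ^+ 2 = 1.
Proof.
move=> hr hs H1 H2 Hu.
set e1 := d1 - c1; set e2 := d2 - c2; set u1 := x1 - c1; set u2 := x2 - c2.
have Hsq : (r^+2 + s^+2 - ((c1-d1)^+2 + (c2-d2)^+2))^+2 = 4 * r^+2 * s^+2.
  have [E0|E0] := eqVneq (e1^+2 + e2^+2) 0.
    have [He1 He2] := sq0 E0.
    have ed1 : d1 = c1 by apply/eqP; rewrite -subr_eq0 -/e1 He1.
    have ed2 : d2 = c2 by apply/eqP; rewrite -subr_eq0 -/e2 He2.
    rewrite ed1 ed2 in H2 *. rewrite -H1 -H2. ring.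
  set E := e1^+2 + e2^+2 in E0.
  set t := (u1*e1 + u2*e2) / E.
  have P1 : (c1 + 2*t*e1 - u1 - c1)^+2 + (c2 + 2*t*e2 - u2 - c2)^+2 = r^+2.
    rewrite /t /E /e1 /e2 -H1 /u1 /u2. field. by move: E0; rewrite /E /e1 /e2.
  have P2 : (c1 + 2*t*e1 - u1 - d1)^+2 + (c2 + 2*t*e2 - u2 - d2)^+2 = s^+2.
    rewrite /t /E /e1 /e2 -H2 /u1 /u2. field. by move: E0; rewrite /E /e1 /e2.
  have [Hy1 Hy2] := Hu _ _ P1 P2.
  have hu1 : u1 = t * e1 by move: Hy1; rewrite /u1; lra.
  have hu2 : u2 = t * e2 by move: Hy2; rewrite /u2; lra.
  have -> : (c1 - d1) = - e1 by rewrite /e1; ring.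
  have -> : (c2 - d2) = - e2 by rewrite /e2; ring.
  rewrite -H1 -H2.
  have -> : x1 - d1 = u1 - e1 by rewrite /u1 /e1; ring.
  have -> : x2 - d2 = u2 - e2 by rewrite /u2 /e2; ring.
  rewrite -/u1 -/u2 hu1 hu2. ring.
rewrite expr_div_n Hsq. field. by rewrite hr hs.
Qed.

Lemma CL_tan (c1 c2 r h1 h2 m x1 x2 : R) : r != 0 -> h1^+2 + h2^+2 = 1 ->
  (x1-c1)^+2 + (x2-c2)^+2 = r^+2 -> x1*h1 + x2*h2 = m ->
  (forall y1 y2 : R, (y1-c1)^+2 + (y2-c2)^+2 = r^+2 ->
      y1*h1 + y2*h2 = m -> y1 = x1 /\ y2 = x2) ->
  ((c1*h1 + c2*h2 - m) / r) ^+ 2 = 1.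
Proof.
move=> hr hh H1 H2 Hu.
pose sg := (x1-c1)*(-h2) + (x2-c2)*h1.
have P1 : (x1 + 2*sg*h2 - c1)^+2 + (x2 - 2*sg*h1 - c2)^+2 = r^+2.
  have -> : (x1 + 2*sg*h2 - c1)^+2 + (x2 - 2*sg*h1 - c2)^+2 =
     (x1-c1)^+2 + (x2-c2)^+2 + 4*sg^+2*(h1^+2+h2^+2-1) by rewrite /sg; ring.
  by rewrite hh subrr mulr0 addr0.
have P2 : (x1 + 2*sg*h2)*h1 + (x2 - 2*sg*h1)*h2 = m by rewrite -H2; ring.
have [Hy1 Hy2] := Hu _ _ P1 P2.
have s0 : sg = 0.
  have -> : sg = sg * (h1^+2 + h2^+2) by rewrite hh mulr1.
  have e1 : sg * h2 = 0 by lra.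
  have e2 : sg * h1 = 0 by lra.
  have -> : sg * (h1^+2 + h2^+2) = (sg*h1)*h1 + (sg*h2)*h2 by ring.
  by rewrite e1 e2; ring.
have Hsq : (c1*h1 + c2*h2 - m)^+2 = r^+2.
  rewrite -H1 -H2.
  have -> : (x1-c1)^+2 + (x2-c2)^+2 = ((x1-c1)^+2 + (x2-c2)^+2) * (h1^+2+h2^+2) by rewrite hh mulr1.
  have -> : ((x1-c1)^+2 + (x2-c2)^+2) * (h1^+2+h2^+2) = (c1*h1 + c2*h2 - (x1*h1+x2*h2))^+2 + sg^+2 by rewrite /sg; ring.
  by rewrite s0 expr0n /= addr0.
rewrite expr_div_n Hsq divff // expf_neq0 //.
Qed.

Lemma LL_tan (h1 h2 m g1 g2 n : R) : h1^+2 + h2^+2 = 1 -> g1^+2 + g2^+2 = 1 ->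
  (forall x1 x2 : R, ~ (x1*h1 + x2*h2 = m /\ x1*g1 + x2*g2 = n)) ->
  (h1*g1 + h2*g2)^+2 = 1.
Proof.
move=> hh hg Hn.
have L : (h1*g1 + h2*g2)^+2 + (h1*g2 - h2*g1)^+2 = 1.
  have -> : (h1*g1 + h2*g2)^+2 + (h1*g2 - h2*g1)^+2 = (h1^+2+h2^+2)*(g1^+2+g2^+2) by ring.
  by rewrite hh hg mulr1.
have [D0|D0] := eqVneq (h1*g2 - h2*g1) 0.
  by move: L; rewrite D0 expr0n /= addr0.
exfalso; apply: (Hn ((m*g2 - n*h2)/(h1*g2 - h2*g1)) ((h1*n - g1 * m)/(h1*g2 - h2*g1))).
split; field; exact: D0.
Qed.

Lemma div1 (a b : R) : b != 0 -> a / b = 1 -> a = b.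
Proof. by move=> hb H; rewrite -[a](divfK hb) H mul1r. Qed.

Lemma sign_gen (C C' : ocircle R) : valid_ocircle C -> valid_ocircle C' ->
  prc C C' = 1 -> exists x, interior C x /\ interior C' x.
Proof.
case: C => [c1 c2 r|h1 h2 m]; case: C' => [d1 d2 s|g1 g2 n] /= hC hC'.
- have h2rs : 2*r*s != 0 by rewrite !mulf_neq0 // pnatr_eq0.
  rewrite prcCC // => /(div1 h2rs) Hk.
  have Hd : (c1-d1)^+2 + (c2-d2)^+2 = (r-s)^+2 by move: Hk; lra.
  have [rp|rn] := ltrP 0 r; have [sp|sn] := ltrP 0 s.
  + have [rs|sr] := lerP r s.
      exists (c1, c2); rewrite /=; split; first nra.
      rewrite Hd; nra.
    exists (d1, d2); rewrite /=; split; last nra.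
    have -> : (d1-c1)^+2 + (d2-c2)^+2 = (c1-d1)^+2 + (c2-d2)^+2 by ring.
    rewrite Hd; nra.
  + have sn' : s < 0 by rewrite lt_neqAle hC' sn.
    exists (c1, c2); rewrite /=; split; first nra.
    rewrite Hd; nra.
  + have rn' : r < 0 by rewrite lt_neqAle hC rn.
    exists (d1, d2); rewrite /=; split; last nra.
    have -> : (d1-c1)^+2 + (d2-c2)^+2 = (c1-d1)^+2 + (c2-d2)^+2 by ring.
    rewrite Hd; nra.
  + 
    pose M := r^+2 + s^+2 + (c1-d1)^+2 + 1.
    exists (c1 + M, c2) => /=; split.
      rewrite subrr expr0n /= addr0 addrC addKr.
      have h1 : 0 < M - r by rewrite /M; have := sqr_ge0 (2*r-1); have := sqr_ge0 s; have := sqr_ge0 (c1-d1); nra.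
      have h2 : 0 < M + r by rewrite /M; have := sqr_ge0 (2*r+1); have := sqr_ge0 s; have := sqr_ge0 (c1-d1); nra.
      have : 0 < (M - r) * (M + r) by apply: mulr_gt0.
      nra.
    have h1 : 0 < c1 + M - d1 - s by rewrite /M; have := sqr_ge0 (2*s-1); have := sqr_ge0 r; have := sqr_ge0 (2*(c1-d1)+1); nra.
    have h2 : 0 < c1 + M - d1 + s by rewrite /M; have := sqr_ge0 (2*s+1); have := sqr_ge0 r; have := sqr_ge0 (2*(c1-d1)+1); nra.
    have : 0 < (c1 + M - d1 - s) * (c1 + M - d1 + s) by apply: mulr_gt0.
    have : 0 <= (c2 - d2)^+2 by apply: sqr_ge0.
    nra.
- rewrite prcCL // => /(div1 hC) Hk.
  have [rp|rn] := ltrP 0 r.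
    exists (c1, c2); rewrite /=; split; first nra.
    lra.
  pose t := 1 - r.
  exists (c1 + t*g1, c2 + t*g2); rewrite /=; split.
    have -> : (c1 + t * g1 - c1) ^+ 2 + (c2 + t * g2 - c2) ^+ 2 = t^+2 * (g1^+2+g2^+2) by ring.
    rewrite hC' mulr1 /t.
    have rn' : r < 0 by rewrite lt_neqAle hC rn.
    nra.
  have -> : (c1 + t * g1) * g1 + (c2 + t * g2) * g2 = c1*g1 + c2*g2 + t*(g1^+2+g2^+2) by ring.
  rewrite hC' mulr1 /t. lra.
- rewrite prcC prcCL // => /(div1 hC') Hk.
  have [rp|rn] := ltrP 0 s.
    exists (d1, d2); rewrite /=; split; last nra.
    lra.
  pose t := 1 - s.
  exists (d1 + t*h1, d2 + t*h2); rewrite /=; split.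
    have -> : (d1 + t * h1) * h1 + (d2 + t * h2) * h2 = d1*h1 + d2*h2 + t*(h1^+2+h2^+2) by ring.
    rewrite hC mulr1 /t. lra.
  have -> : (d1 + t * h1 - d1) ^+ 2 + (d2 + t * h2 - d2) ^+ 2 = t^+2 * (h1^+2+h2^+2) by ring.
  rewrite hC mulr1 /t.
  have rn' : s < 0 by rewrite lt_neqAle hC' rn.
  nra.
- rewrite prcLL => Hk.
  pose t := m^+2 + n^+2 + 1.
  exists (t*h1, t*h2) => /=; split.
    have -> : t * h1 * h1 + t * h2 * h2 = t * (h1^+2+h2^+2) by ring.
    rewrite hC mulr1 /t; nra.
  have -> : t * h1 * g1 + t * h2 * g2 = t * (h1*g1+h2*g2) by ring.
  rewrite Hk mulr1 /t; nra.
Qed.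


Lemma k_eq1 (k a b : R) : 1 <= k^+2 -> 0 < a -> (k^+2 - 1) * a = - b^+2 -> k^+2 = 1.
Proof.
move=> H1 Ha E.
have h0 : 0 <= (k^+2 - 1) * a by apply: mulr_ge0; lra.
have hb : 0 <= b^+2 by apply: sqr_ge0.
have : (k^+2 - 1) * a = 0 by lra.
move/eqP; rewrite mulf_eq0 => /orP [/eqP|/eqP]; lra.
Qed.

Lemma CC_final (c1 c2 r d1 d2 s x1 x2 : R) : r != 0 -> s != 0 ->
  (x1-c1)^+2 + (x2-c2)^+2 = r^+2 -> (x1-d1)^+2 + (x2-d2)^+2 = s^+2 ->
  1 <= ((r^+2 + s^+2 - ((c1-d1)^+2 + (c2-d2)^+2)) / (2*r*s)) ^+ 2 ->
  (c1 = d1 /\ c2 = d2 /\ r^+2 = s^+2) \/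
  (forall y1 y2 : R, (y1-c1)^+2 + (y2-c2)^+2 = r^+2 ->
      (y1-d1)^+2 + (y2-d2)^+2 = s^+2 -> y1 = x1 /\ y2 = x2).
Proof.
move=> hr hs Hx1 Hx2.
set k := (_ / _) => Hk1.
have Hk2 : 2*k*r*s = r^+2 + s^+2 - ((c1-d1)^+2 + (c2-d2)^+2).
  rewrite /k; field; by rewrite hr hs.
have Hky : forall y1 y2, (y1-c1)^+2 + (y2-c2)^+2 = r^+2 ->
    (y1-d1)^+2 + (y2-d2)^+2 = s^+2 ->
    k*r*s = (y1-c1)*(y1-d1) + (y2-c2)*(y2-d2).
  move=> y1 y2 Hy1 Hy2.
  have E : (y1-c1)^+2 + (y2-c2)^+2 + ((y1-d1)^+2 + (y2-d2)^+2) - ((c1-d1)^+2 + (c2-d2)^+2)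
     = 2 * ((y1-c1)*(y1-d1) + (y2-c2)*(y2-d2)) by ring.
  rewrite Hy1 Hy2 -Hk2 in E. lra.
have kk : k^+2 = 1.
  apply: (@k_eq1 k (r^+2*s^+2) ((x1-c1)*(x2-d2) - (x2-c2)*(x1-d1))) => //.
    by rewrite mulr_gt0 // exprn_even_gt0.
  have L : (k*r*s)^+2 + ((x1-c1)*(x2-d2) - (x2-c2)*(x1-d1))^+2 = r^+2 * s^+2.
    rewrite (Hky _ _ Hx1 Hx2) -Hx1 -Hx2; ring.
  have e : (k^+2 - 1) * (r^+2*s^+2) = (k*r*s)^+2 - r^+2*s^+2 by ring.
  rewrite e -L; ring.
have lin : forall y1 y2, (y1-c1)^+2 + (y2-c2)^+2 = r^+2 ->
    (y1-d1)^+2 + (y2-d2)^+2 = s^+2 ->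
    s*(y1-c1) = k*r*(y1-d1) /\ s*(y2-c2) = k*r*(y2-d2).
  move=> y1 y2 Hy1 Hy2.
  have E : (s*(y1-c1) - k*r*(y1-d1))^+2 + (s*(y2-c2) - k*r*(y2-d2))^+2 = 0.
    have -> : (s*(y1-c1) - k*r*(y1-d1))^+2 + (s*(y2-c2) - k*r*(y2-d2))^+2 =
      s^+2 * ((y1-c1)^+2 + (y2-c2)^+2) - 2*(k*r*s)*((y1-c1)*(y1-d1) + (y2-c2)*(y2-d2))
      + k^+2 * r^+2 * ((y1-d1)^+2 + (y2-d2)^+2) by ring.
    rewrite Hy1 Hy2 -(Hky _ _ Hy1 Hy2).
    have -> : s ^+ 2 * r ^+ 2 - 2 * (k * r * s) * (k * r * s) + k ^+ 2 * r ^+ 2 * s ^+ 2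
       = r^+2 * s^+2 * (1 - k^+2) by ring.
    by rewrite kk subrr mulr0.
  have [e1 e2] := sq0 E. split; lra.
have [xa xb] := lin _ _ Hx1 Hx2.
have [E|E] := eqVneq s (k*r).
  left. rewrite -E in xa xb.
  have e1 : c1 = d1.
    apply/eqP; rewrite -subr_eq0; apply/eqP.
    have : s * (d1 - c1) = 0 by lra.
    by move/eqP; rewrite mulf_eq0 (negbTE hs) /= subr_eq0 => /eqP ->; rewrite subrr.
  have e2 : c2 = d2.
    apply/eqP; rewrite -subr_eq0; apply/eqP.
    have : s * (d2 - c2) = 0 by lra.
    by move/eqP; rewrite mulf_eq0 (negbTE hs) /= subr_eq0 => /eqP ->; rewrite subrr.
  split => //; split => //.
  by rewrite E exprMn kk mul1r.
right => y1 y2 Hy1 Hy2.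
have [ya yb] := lin _ _ Hy1 Hy2.
have Ne : s - k*r != 0 by rewrite subr_eq0.
split; apply: (mulfI Ne); lra.
Qed.

Lemma CL_final (c1 c2 r h1 h2 m x1 x2 : R) : r != 0 -> h1^+2 + h2^+2 = 1 ->
  (x1-c1)^+2 + (x2-c2)^+2 = r^+2 -> x1*h1 + x2*h2 = m ->
  1 <= ((c1*h1 + c2*h2 - m) / r) ^+ 2 ->
  (forall y1 y2 : R, (y1-c1)^+2 + (y2-c2)^+2 = r^+2 ->
      y1*h1 + y2*h2 = m -> y1 = x1 /\ y2 = x2).
Proof.
move=> hr hh Hx1 Hx2.
set k := (_ / _) => Hk1.
have Hk2 : k*r = c1*h1 + c2*h2 - m by rewrite /k; field.
have kk : k^+2 = 1.
  apply: (@k_eq1 k (r^+2) ((x1-c1)*(-h2) + (x2-c2)*h1)) => //.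
    by rewrite exprn_even_gt0.
  have L : (k*r)^+2 + ((x1-c1)*(-h2) + (x2-c2)*h1)^+2 = r^+2.
    rewrite Hk2 -Hx2 -Hx1.
    have -> : (x1 - c1) ^+ 2 + (x2 - c2) ^+ 2 = ((x1 - c1) ^+ 2 + (x2 - c2) ^+ 2) * (h1^+2+h2^+2) by rewrite hh mulr1.
    ring.
  have e : (k^+2 - 1) * r^+2 = (k*r)^+2 - r^+2 by ring.
  rewrite e -L; ring.
have lin : forall y1 y2, (y1-c1)^+2 + (y2-c2)^+2 = r^+2 -> y1*h1 + y2*h2 = m ->
    y1 - c1 = - k*r*h1 /\ y2 - c2 = - k*r*h2.
  move=> y1 y2 Hy1 Hy2.
  have E : (y1 - c1 + k*r*h1)^+2 + (y2 - c2 + k*r*h2)^+2 = 0.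
    have -> : (y1 - c1 + k*r*h1)^+2 + (y2 - c2 + k*r*h2)^+2 =
       ((y1-c1)^+2 + (y2-c2)^+2) + 2*(k*r)*((y1*h1+y2*h2) - (c1*h1+c2*h2))
       + (k*r)^+2*(h1^+2+h2^+2) by ring.
    rewrite Hy1 Hy2 hh mulr1.
    have -> : m - (c1*h1 + c2*h2) = - (k*r) by rewrite Hk2; ring.
    have -> : r ^+ 2 + 2 * (k * r) * - (k * r) + (k * r) ^+ 2 = r^+2 * (1 - k^+2) by ring.
    by rewrite kk subrr mulr0.
  have [e1 e2] := sq0 E. split; lra.
move=> y1 y2 Hy1 Hy2.
have [a b] := lin _ _ Hx1 Hx2. have [a' b'] := lin _ _ Hy1 Hy2.
split; lra.
Qed.

Lemma tan_sym (C C' : ocircle R) p : tangent_at C C' p -> tangent_at C' C p.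
Proof. by case=> [a [b c]]; split=> //; split=> // q h1 h2; apply: c. Qed.

Lemma tan_sq (C C' : ocircle R) p : valid_ocircle C -> valid_ocircle C' ->
  tangent_at C C' p -> prc C C' ^+ 2 = 1.
Proof.
wlog: C C' / (exists c1 c2 r, C = OCirc c1 c2 r) \/ (exists h1 h2 m, C' = OLine h1 h2 m).
  move=> W hC hC' Ht.
  case: C hC Ht => [c1 c2 r|h1 h2 m] hC Ht; first by apply: (W _ _ _ hC) => //; left; eauto.
  case: C' hC' Ht => [d1 d2 s|g1 g2 n] hC' Ht; last by apply: (W _ _ _ hC) => //; right; eauto.
  rewrite prcC; apply: (W _ _ _ hC' hC) => //; [left; eauto| exact: tan_sym].
case=> [[c1 [c2 [r ->]]]|[h1 [h2 [m ->]]]].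
  case: C' => [d1 d2 s|g1 g2 n] /= hr hs [Hp1 [Hp2 Hu]].
    case: p Hp1 Hp2 Hu => [[x1 x2]|] //= Hp1 Hp2 Hu.
    rewrite prcCC //; apply: (CC_tan hr hs Hp1 Hp2) => y1 y2 Hy1 Hy2.
    by case: (Hu (Some (y1, y2)) Hy1 Hy2).
  case: p Hp1 Hp2 Hu => [[x1 x2]|] //= Hp1 Hp2 Hu.
  rewrite prcCL //; apply: (CL_tan hr hs Hp1 Hp2) => y1 y2 Hy1 Hy2.
  by case: (Hu (Some (y1, y2)) Hy1 Hy2).
case: C => [c1 c2 r|g1 g2 n] /= hr hs [Hp1 [Hp2 Hu]].
  case: p Hp1 Hp2 Hu => [[x1 x2]|] //= Hp1 Hp2 Hu.
  rewrite prcCL //; apply: (CL_tan hr hs Hp1 Hp2) => y1 y2 Hy1 Hy2.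
  by case: (Hu (Some (y1, y2)) Hy1 Hy2).
have pN : None = p by apply: Hu.
rewrite prcLL; apply: (LL_tan hr hs) => x1 x2 [H1 H2].
by have := Hu (Some (x1, x2)) H1 H2; rewrite -pN.
Qed.

Lemma desc_sign (C C' : ocircle R) p : valid_ocircle C -> valid_ocircle C' ->
  tangent_at C C' p -> (forall x, ~ (interior C x /\ interior C' x)) ->
  prc C C' = -1.
Proof.
move=> hC hC' Ht Hd.
have := tan_sq hC hC' Ht; move/eqP; rewrite sqrf_eq1 => /orP[/eqP H|/eqP //].
by have [x Hx] := sign_gen hC hC' H; case: (Hd x Hx).
Qed.

Definition concl (C1 C2 : ocircle R) :=
    (forall p, on_circle C1 p <-> on_circle C2 p) \/
    (exists p, tangent_at C1 C2 p) \/
    (forall p, ~ (on_circle C1 p /\ on_circle C2 p)).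

Lemma concl_sym C1 C2 : concl C1 C2 -> concl C2 C1.
Proof.
case=> [H|[[p Hp]|H]]; [left=> p; by rewrite H| right; left; exists p; exact: tan_sym|].
by right; right => p [a b]; apply: (H p).
Qed.

Lemma tanS (C C' : ocircle R) x1 x2 : on_circle C (Some (x1, x2)) -> on_circle C' (Some (x1, x2)) ->
  (forall y1 y2, on_circle C (Some (y1, y2)) -> on_circle C' (Some (y1, y2)) -> y1 = x1 /\ y2 = x2) ->
  ~ (on_circle C None /\ on_circle C' None) ->
  concl C C'.
Proof.
move=> H1 H2 Hu HN; right; left; exists (Some (x1, x2)); split=> //; split=> //.
case=> [[y1 y2]|] a b; first by case: (Hu y1 y2 a b) => -> ->.
by case: HN.
Qed.

Lemma final_geom (C C' : ocircle R) : valid_ocircle C -> valid_ocircle C' ->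
  1 <= prc C C' ^+ 2 -> concl C C'.
Proof.
move=> hC hC' Hk.
case: (classic (exists p, on_circle C p /\ on_circle C' p)); last first.
  by move=> N; right; right => p Hp; apply: N; exists p.
case=> p [Hp1 Hp2].
case: C hC Hk Hp1 => [c1 c2 r|h1 h2 m] hC Hk Hp1;
  case: C' hC' Hk Hp2 => [d1 d2 s|g1 g2 n] hC' Hk Hp2.
- case: p Hp1 Hp2 => [[x1 x2]|] //= Hp1 Hp2.
  rewrite prcCC // in Hk.
  case: (CC_final hC hC' Hp1 Hp2 Hk) => [[e1 [e2 e3]]|Hu].
    left; case=> [[y1 y2]|] //=. by rewrite e1 e2 e3.
  apply: (@tanS _ _ x1 x2) => //=; try (by case); move=> y1 y2 a b; exact: Hu.
- case: p Hp1 Hp2 => [[x1 x2]|] //= Hp1 Hp2.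
  rewrite prcCL // in Hk.
  apply: (@tanS _ _ x1 x2) => //=; try (by case); move=> y1 y2 a b; exact: (CL_final hC hC' Hp1 Hp2 Hk).
- case: p Hp1 Hp2 => [[x1 x2]|] //= Hp1 Hp2.
  rewrite prcC prcCL // in Hk.
  apply: concl_sym.
  apply: (@tanS _ _ x1 x2) => //=; try (by case); move=> y1 y2 a b; exact: (CL_final hC' hC Hp2 Hp1 Hk).
- rewrite prcLL in Hk. move: hC hC' => /= hC hC'.
  set k := h1*g1 + h2*g2 in Hk.
  have kk : k^+2 = 1.
    apply: (@k_eq1 k 1 (h1*g2 - h2*g1)); [exact: Hk|exact: ltr01|].
    have -> : (k^+2 - 1) * 1 = k^+2 - (h1^+2+h2^+2)*(g1^+2+g2^+2) by rewrite hC hC' !mulr1.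
    rewrite /k; ring.
  have [eg1 eg2] : g1 = k*h1 /\ g2 = k*h2.
    have E : (g1 - k*h1)^+2 + (g2 - k*h2)^+2 = 0.
      have -> : (g1 - k*h1)^+2 + (g2 - k*h2)^+2 = (g1^+2+g2^+2) - 2*k^+2 + k^+2*(h1^+2+h2^+2) by rewrite /k; ring.
      rewrite hC hC' mulr1 kk; ring.
    have [a b] := sq0 E; split; lra.
  case: (classic (exists x1 x2, x1*h1 + x2*h2 = m /\ x1*g1 + x2*g2 = n)).
    case=> x1 [x2 [a b]].
    have en : n = k * m by rewrite -b -a eg1 eg2; ring.
    left; case=> [[y1 y2]|] //=; rewrite eg1 eg2 en; split => H.
      by rewrite -H; ring.
    have : k * (k * (y1 * h1 + y2 * h2)) = k * (k * m).
      by rewrite -H; ring.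
    by rewrite !mulrA -expr2 kk !mul1r.
  move=> N; right; left; exists None; split=> //; split=> //.
  case=> [[y1 y2]|] //= a b. by case: N; exists y1, y2.
Qed.

Definition o0 : 'I_4 := @Ordinal 4 0 isT.
Definition o1 : 'I_4 := @Ordinal 4 1 isT.
Definition o2 : 'I_4 := @Ordinal 4 2 isT.
Definition o3 : 'I_4 := @Ordinal 4 3 isT.

Lemma sum4 (T : nmodType) (F : 'I_4 -> T) : \sum_(i < 4) F i = F o0 + F o1 + F o2 + F o3.
Proof. rewrite !big_ord_recr big_ord0 /= add0r. congr (_ + _ + _ + _); congr F; exact: val_inj. Qed.

Lemma ord4P (P : 'I_4 -> Prop) : P o0 -> P o1 -> P o2 -> P o3 -> forall i, P i.
Proof.
move=> h0 h1 h2 h3 [[|[|[|[|i]]]] Hi] //.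
- by have -> : Ordinal Hi = o0 by exact: val_inj.
- by have -> : Ordinal Hi = o1 by exact: val_inj.
- by have -> : Ordinal Hi = o2 by exact: val_inj.
- by have -> : Ordinal Hi = o3 by exact: val_inj.
Qed.

Definition prM (W1 W2 : 'M[R]_4) (k l : 'I_4) : R :=
  - (W1 k o0 * W2 l o1 + W1 k o1 * W2 l o0) / 2 + W1 k o2 * W2 l o2 + W1 k o3 * W2 l o3.

Lemma prc_W (D D' : 'I_4 -> ocircle R) k l : prc (D k) (D' l) = prM (Wmat D) (Wmat D') k l.
Proof. by rewrite /prM !mxE. Qed.

Lemma bilin (U V W : 'M[R]_4) k l : prM (U *m W) (V *m W) k l =
  \sum_a \sum_b U k a * V l b * prM W W a b.
Proof. rewrite /prM !mxE !sum4 /prM. ring. Qed.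

Definition Good (U : 'M[R]_4) := exists A : 'M[int]_4,
  (forall a b, U a b = (A a b)%:~R) /\ forall k, exists p : int, \sum_j A k j = 2 * p + 1.

Lemma parity (U V : 'M[R]_4) k l : Good U -> Good V ->
  1 <= (\sum_a \sum_b U k a * V l b * (if a == b then 1 else -1)) ^+ 2.
Proof.
move=> [A [HA pA]] [B [HB pB]].
have [p hp] := pA k. have [q hq] := pB l.
rewrite !sum4 !HA !HB /=.
set z : int := A k o0 * B l o0 + A k o1 * B l o1 + A k o2 * B l o2 + A k o3 * B l o3.
set E := (X in 1 <= X ^+ 2).
have -> : E = ((z + z) - (A k o0 + A k o1 + A k o2 + A k o3) * (B l o0 + B l o1 + B l o2 + B l o3))%:~R.
  rewrite /E /z !(intrD, intrM, intrB). ring.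
rewrite -rmorphXn /= ler1z.
move: hp hq; rewrite !sum4 => -> ->.
have -> : z + z - (2 * p + 1) * (2 * q + 1) = 2 * (z - 2 * p * q - p - q) - 1 by ring.
move: (z - _ - _ - _) => y. nia.
Qed.

Lemma Good1 : Good (1%:M).
Proof.
exists 1%:M; split.
  by move=> a b; rewrite !mxE; case: (a == b).
apply: ord4P; exists 0; rewrite sum4 !mxE /=; by [].
Qed.

Lemma GoodS i : Good (Sperp R i).
Proof.
exists (\matrix_(a < 4, b < 4) if b == i then (if a == i then -1 else 2) else (if a == b then 1 else 0)).
split.
  move=> a b; rewrite !mxE; case: (b == i); case: (a == i); case: (a == b) => //=.

by move: i; apply: ord4P; apply: ord4P; rewrite sum4 !mxE /=; first [by exists (-1) | by exists 1].
Qed.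

Lemma GoodM U V : Good U -> Good V -> Good (U *m V).
Proof.
move=> [A [HA pA]] [B [HB pB]]; exists (A *m B); split.
  move=> a b; rewrite !mxE rmorph_sum; apply: eq_bigr => j _.
  by rewrite HA HB rmorphM.
move=> k.
have [p hp] := pA k.
have [q0 h0] := pB o0. have [q1 h1] := pB o1.
have [q2 h2] := pB o2. have [q3 h3] := pB o3.
exists (A k o0 * q0 + A k o1 * q1 + A k o2 * q2 + A k o3 * q3 + p).
under eq_bigr do rewrite mxE.
rewrite exchange_big /=.
under eq_bigr do rewrite -mulr_sumr.
rewrite sum4 h0 h1 h2 h3.
move: hp; rewrite sum4 => hp.
have -> : A k o0 * (2 * q0 + 1) + A k o1 * (2 * q1 + 1) + A k o2 * (2 * q2 + 1) +
  A k o3 * (2 * q3 + 1) = 2 * (A k o0 * q0 + A k o1 * q1 + A k o2 * q2 + A k o3 * q3)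
   + (A k o0 + A k o1 + A k o2 + A k o3) by ring.
rewrite hp; ring.
Qed.

Lemma SS i : Sperp R i *m Sperp R i = 1%:M.
Proof.
apply/matrixP => a b; rewrite !mxE sum4 !mxE.
move: i a b; apply: ord4P; apply: ord4P; apply: ord4P; rewrite /= ?mxE /=; ring.
Qed.

Lemma Aperp_good U : in_Aperp U ->
  Good U /\ exists V, Good V /\ U *m V = 1%:M /\ V *m U = 1%:M.
Proof.
elim=> {U} [|i|U V _ [gU [U' [gU' [e1 e2]]]] _ [gV [V' [gV' [f1 f2]]]]|U _ [gU [U' [gU' [e1 e2]]]]].
- split; first exact: Good1. by exists 1%:M; rewrite mul1mx; split=> //; exact: Good1.
- split; first exact: GoodS. by exists (Sperp R i); rewrite SS; split=> //; exact: GoodS.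
- split; first exact: GoodM.
  exists (V' *m U'); split; first exact: GoodM.
  split.
    by rewrite mulmxA -(mulmxA U) f1 mulmx1 e1.
  by rewrite mulmxA -(mulmxA V') e2 mulmx1 f2.
- have Hu := (mulmx1_unit e1).1.
  have Ei : invmx U = U'.
    have : invmx U *m (U *m U') = U' by rewrite mulKmx.
    by rewrite e1 mulmx1.
  rewrite Ei; split=> //; exists U; split=> //.
Qed.

Lemma prc_self (C : ocircle R) : valid_ocircle C -> prc C C = 1.
Proof.
case: C => [c1 c2 r|h1 h2 m] /= hC.
  rewrite prcCC // !subrr expr0n /= addr0 subr0. field. by rewrite hC.
by rewrite prcLL -!expr2.
Qed.

Lemma on_rev (C : ocircle R) p : on_circle (reverse C) p <-> on_circle C p.
Proof.
case: C => [c1 c2 r|h1 h2 m]; case: p => [[x1 x2]|] //=; first by rewrite sqrrN.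
split=> H; [|by rewrite -H; ring].
have -> : m = - (x1 * - h1 + x2 * - h2) by rewrite H opprK.
ring.
Qed.

Lemma valid_rev (C : ocircle R) : valid_ocircle C -> valid_ocircle (reverse C).
Proof. by case: C => [c1 c2 r|h1 h2 m] /=; [rewrite oppr_eq0|rewrite !sqrrN]. Qed.

Lemma tan_rev (C C' : ocircle R) p : tangent_at C C' p -> tangent_at (reverse C) (reverse C') p.
Proof.
case=> [a [b c]]; split; first by apply/on_rev.
split; first by apply/on_rev.
by move=> q /on_rev h1 /on_rev h2; apply: c.
Qed.

Lemma gram (D : 'I_4 -> ocircle R) : descartes D ->
  forall a b, prM (Wmat D) (Wmat D) a b = if a == b then 1 else -1.
Proof.
case=> [hv [[tp [Ht _]] Hint]] a b; rewrite -prc_W.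
case: eqVneq => [->|ne]; first exact: prc_self.
case: Hint => Hd.
  by apply: (desc_sign (hv a) (hv b) (Ht a b ne)) => x; apply: Hd.
rewrite -prc_rev.
apply: (desc_sign (valid_rev (hv a)) (valid_rev (hv b)) (tan_rev (Ht a b ne))).
by move=> x; apply: (Hd a b ne).
Qed.

End Geo.

Theorem theorem5p1 (R : realType) (D : 'I_4 -> ocircle R) :
  descartes D ->
  forall C1 C2 : ocircle R, in_Pperp D C1 -> in_Pperp D C2 ->
    (forall p, on_circle C1 p <-> on_circle C2 p) \/
    (exists p, tangent_at C1 C2 p) \/
    (forall p, ~ (on_circle C1 p /\ on_circle C2 p)).
Proof.
move=> HD C1 C2 [D1 [[HD1 [U [HU EU]]] [k <-]]] [D2 [[HD2 [V [HV EV]]] [l <-]]].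
apply: final_geom; [exact: HD1.1|exact: HD2.1|].
rewrite prc_W EU EV bilin.
under eq_bigr do under eq_bigr do rewrite (gram HD).
apply: parity; [exact: (Aperp_good HU).1|exact: (Aperp_good HV).1].
Qed.
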